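(* Let $\Delta\vdash t$ be a closed nominal term-in-context and $\hat t=\mathcal{T}(\Delta,t)$. If $\pi_1\cdot X$ and $\pi_2\cdot X$ are two occurrences of the same variable $X$ in $t$ and $X(\overline{xs_1})$, $X(\overline{xs_2})$ are their respective translations in $\hat t$, then $\pi_1^{-1}\cdot\overline{xs_1}=\pi_2^{-1}\cdot\overline{xs_2}$ (as lists, with permutations applied elementwise).
   Context: Nominal terms: $s,t ::= a \mid \pi\cdot X \mid [a]s \mid f\,s \mid (s_1,\ldots,s_n)$ over atoms, variables, function symbols and finite-support permutations $\pi$ of atoms. A freshness context $\Delta$ is a set of constraints $a\#X$. $\Delta\vdash t$ is closed if: (1) every atom occurrence $a$ in $t$ lies under an abstraction $[a]$; (2) if $\pi\cdot X$ is in the scope of an abstraction of $\pi(a)$ then every occurrence $\pi'\cdot X$ of $X$ in $t$ is in the scope of an abstraction of $\pi'(a)$, or $a\#X\in\Delta$; (3) for two occurrences $\pi_1\cdot X,\pi_2\cdot X$ and $a$ with $\pi_1(a)\neq\pi_2(a)$, if $a$ is not abstracted in one of the occurrences then $a\#X\in\Delta$. Translation: $\Lambda_t(X)$ is the set of atoms $a$ such that some occurrence of $X$ in $t$ is in the scope of $[a]$. With a fixed total order on atoms, $\mathcal{T}(\Delta,t)$ is the CRS meta-term obtained from $t$ by replacing each occurrence $\pi\cdot X$ by $X(\overline{xs})$ with $\overline{xs}=\pi\cdot xs$, where $xs$ is the ascending list of $\{\pi^{-1}(a)\mid a\in\Lambda_t(X)\}\setminus\{a\mid a\#X\in\Delta\}$;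 other constructs are kept unchanged. *)

(* Defs.v *)
From mathcomp Require Import all_boot.
Set Implicit Arguments. Unset Strict Implicit. Unset Printing Implicit Defensive.

(* Atoms, variables and function symbols are named by natural numbers.
   The fixed total order on atoms is the usual order <= on nat. *)
Definition atom := nat.
Definition var := nat.
Definition fsym := nat.

(* Finite-support permutations of atoms, represented as finite lists of swaps:
   [:: (a1,b1); ...; (an,bn)] denotes (a1 b1) o ... o (an bn).
   Every finite-support permutation is such a product. *)
Definition perm := seq (atom * atom).

Definition swap (a b c : atom) : atom :=
  if c == a then b else if c == b then a else c.

Definition perm_act (p : perm) (c : atom) : atom :=
  foldr (fun ab c => swap ab.1 ab.2 c) c p.

Definition perm_inv (p : perm) : perm := rev p.

(* Nominal terms: a | pi.X | [a]s | f s | (s1,...,sn) *)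
Inductive term : Type :=
| Atom of atom
| Susp of perm & var
| Abs of atom & term
| App of fsym & term
| Tup of seq term.

(* freshness context: a finite set of constraints a # X *)
Definition fctx := seq (atom * var).

(* Variable occurrences of a term, in left-to-right order, each recorded as
   (list of atoms abstracted above the occurrence, permutation, variable). *)
Fixpoint occs_sc (s : seq atom) (t : term) : seq (seq atom * perm * var) :=
  match t with
  | Atom _ => [::]
  | Susp p X => [:: (s, p, X)]
  | Abs a u => occs_sc (a :: s) u
  | App _ u => occs_sc s u
  | Tup ts => flatten (map (occs_sc s) ts)
  end.
Definition occs (t : term) := occs_sc [::] t.

Fixpoint aoccs_sc (s : seq atom) (t : term) : seq (seq atom * atom) :=
  match t with
  | Atom a => [:: (s, a)]
  | Susp _ _ => [::]
  | Abs a u => aoccs_sc (a :: s) u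
  | App _ u => aoccs_sc s u
  | Tup ts => flatten (map (aoccs_sc s) ts)
  end.
Definition aoccs (t : term) := aoccs_sc [::] t.

Definition nclosed (D : fctx) (t : term) : Prop :=
  (forall s a, (s, a) \in aoccs t -> a \in s) /\
  (forall s p X a, (s, p, X) \in occs t -> perm_act p a \in s ->
     forall s' p', (s', p', X) \in occs t ->
       perm_act p' a \in s' \/ (a, X) \in D) /\
  (forall s1 p1 s2 p2 X a, (s1, p1, X) \in occs t -> (s2, p2, X) \in occs t ->
     perm_act p1 a != perm_act p2 a ->
     (perm_act p1 a \notin s1 \/ perm_act p2 a \notin s2) ->
     (a, X) \in D).

Definition Lambda (t : term) (X : var) : seq atom :=
  flatten [seq o.1.1 | o <- occs t & o.2 == X].

(* CRS meta-terms *)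
Inductive mterm : Type :=
| MAtom of atom
| MVar of var & seq atom
| MAbs of atom & mterm
| MApp of fsym & mterm
| MTup of seq mterm.

Definition xs_of (D : fctx) (t : term) (p : perm) (X : var) : seq atom :=
  sort leq (undup [seq b <- map (perm_act (perm_inv p)) (Lambda t X)
                   | (b, X) \notin D]).

Fixpoint translate_aux (D : fctx) (t0 : term) (t : term) : mterm :=
  match t with
  | Atom a => MAtom a
  | Susp p X => MVar X (map (perm_act p) (xs_of D t0 p X))
  | Abs a u => MAbs a (translate_aux D t0 u)
  | App f u => MApp f (translate_aux D t0 u)
  | Tup ts => MTup (map (translate_aux D t0) ts)
  end.

Definition translate (D : fctx) (t : term) : mterm := translate_aux D t t.

(* meta-variable occurrences of a meta-term, in left-to-right order
   (the same traversal order as [occs]). *)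
Fixpoint mvoccs (m : mterm) : seq (var * seq atom) :=
  match m with
  | MAtom _ => [::]
  | MVar X xs => [:: (X, xs)]
  | MAbs _ u => mvoccs u
  | MApp _ u => mvoccs u
  | MTup ms => flatten (map mvoccs ms)
  end.

(* Main.v *)
Require Import Defs.
From mathcomp Require Import all_boot.
From Stdlib Require List.

Lemma swapK a b c : swap a b (swap a b c) = c.
Proof.
rewrite /swap; case: (eqVneq c a) => [->|ca]; first by rewrite eqxx; case: eqVneq.
case: (eqVneq c b) => [->|cb]; first by rewrite eqxx.
by rewrite (negbTE ca) (negbTE cb).
Qed.

Lemma perm_invK p c : perm_act (perm_inv p) (perm_act p c) = c.
Proof.
elim: p c => [|x p IH] c //=.
rewrite /perm_inv rev_cons /perm_act foldr_rcons /= swapK.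
exact: IH.
Qed.

Lemma perm_invK' p c : perm_act p (perm_act (perm_inv p) c) = c.
Proof. by have := perm_invK (perm_inv p) c; rewrite /perm_inv revK. Qed.

Definition fo D t0 (o : seq atom * perm * var) :=
  (o.2, map (perm_act o.1.2) (xs_of D t0 o.1.2 o.2)).

Definition term_ind' (P : term -> Prop)
  (HA : forall a, P (Atom a)) (HS : forall p X, P (Susp p X))
  (HB : forall a u, P u -> P (Abs a u)) (HF : forall f u, P u -> P (App f u))
  (HT : forall ts, (forall u, Stdlib.Lists.List.In u ts -> P u) -> P (Tup ts)) :
  forall t, P t :=
  fix F t := match t with
  | Atom a => HA a
  | Susp p X => HS p X
  | Abs a u => HB a u (F u)
  | App f u => HF f u (F u)
  | Tup ts => HT ts ((fix G l : forall u, Stdlib.Lists.List.In u l -> P u :=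
       match l with
       | nil => fun u (H : Stdlib.Lists.List.In u nil) => False_ind _ H
       | cons v l' => fun u H => match H with
           | or_introl E => eq_ind v P (F v) u E
           | or_intror H' => G l' u H' end
       end) ts)
  end.

Lemma mv_occs (D : fctx) (t0 t : term) :
  forall s, mvoccs (translate_aux D t0 t) = map (fo D t0) (occs_sc s t).
Proof.
elim/term_ind': t => [a|p X|a u IH|f u IH|ts IH] s //=.
rewrite map_flatten -map_comp; congr flatten.
elim: ts IH => [|u ts IHl] IH //=.
rewrite (IH u (or_introl erefl) s) IHl // => v H; exact: IH v (or_intror H).
Qed.

Lemma xs_mem (D : fctx) (t : term) (p : perm) (X : var) (b : atom) :
  (b \in [seq b <- map (perm_act (perm_inv p)) (Lambda t X) | (b, X) \notin D])
  <-> ((b, X) \notin D /\ exists s' p', (s', p', X) \in occs t /\ perm_act p b \in s').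
Proof.
rewrite mem_filter; split.
- case/andP=> bD /mapP [a aL Eb]; subst b; split => //.
  rewrite perm_invK'.
  case/flattenP: aL => l /mapP [o]; rewrite mem_filter => /andP [/eqP oX oin] -> ain.
  case: o oX oin ain => [[s' p'] X'] /= -> oin ain.
  by exists s', p'.
- case=> bD [s' [p' [oin ain]]]; rewrite bD /=.
  apply/mapP; exists (perm_act p b); last by rewrite perm_invK.
  apply/flattenP; exists s' => //; apply/mapP; exists (s', p', X) => //.
  by rewrite mem_filter eqxx.
Qed.

Lemma xs_of_eq (D : fctx) (t : term) (s1 s2 : seq atom) (p1 p2 : perm) (X : var) :
  nclosed D t -> (s1, p1, X) \in occs t -> (s2, p2, X) \in occs t ->
  xs_of D t p1 X = xs_of D t p2 X.
Proof.
move=> [_ [H2 H3]] o1 o2.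
have side : forall (q1 : perm) (r1 : seq atom) (q2 : perm) (r2 : seq atom), (r1, q1, X) \in occs t -> (r2, q2, X) \in occs t ->
   forall b, (b \in [seq b <- map (perm_act (perm_inv q1)) (Lambda t X) | (b, X) \notin D]) ->
   (b \in [seq b <- map (perm_act (perm_inv q2)) (Lambda t X) | (b, X) \notin D]).
  move=> q1 r1 q2 r2 i1 i2 b /xs_mem [bD [s3 [p3 [oin ain]]]].
  apply/xs_mem; split => //; exists r2, q2; split => //.
  have pin : perm_act p3 b \in s3.
    case: (eqVneq (perm_act q1 b) (perm_act p3 b)) => [<- //|ne].
    case: (boolP (perm_act p3 b \in s3)) => // nin.
    by rewrite (H3 _ _ _ _ _ _ i1 oin ne (or_intror nin)) in bD.
  case: (H2 _ _ _ _ oin pin _ _ i2) => // bin.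
  by rewrite bin in bD.
rewrite /xs_of; apply/perm_sortP.
- by move=> x y; apply: leq_total.
- by move=> x y z; apply: leq_trans.
- by move=> x y; rewrite -eqn_leq => /eqP.
apply: uniq_perm; rewrite ?undup_uniq // => b; rewrite !mem_undup.
apply/idP/idP; [exact: (side _ _ _ _ o1 o2) | exact: (side _ _ _ _ o2 o1)].
Qed.

Theorem mainTheorem7 (Delta : fctx) (t : term) (i j : nat) (X : var)
    (s1 s2 : seq atom) (p1 p2 : perm) (xs1 xs2 : seq atom) :
  nclosed Delta t ->
  onth (occs t) i = Some (s1, p1, X) ->
  onth (occs t) j = Some (s2, p2, X) ->
  onth (mvoccs (translate Delta t)) i = Some (X, xs1) ->
  onth (mvoccs (translate Delta t)) j = Some (X, xs2) ->
  map (perm_act (perm_inv p1)) xs1 = map (perm_act (perm_inv p2)) xs2.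
Proof.
move=> cl e1 e2.
rewrite /translate (mv_occs Delta t t [::]) !onth_map -/(occs t) e1 e2 /=.
move=> [<-] [<-].
rewrite -!map_comp !(@eq_map _ _ _ id) ?map_id; last first.
  by move=> c /=; rewrite perm_invK. by move=> c /=; rewrite perm_invK.
apply: xs_of_eq cl _ _; apply/onthP; eauto.
Qed.
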